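(* Let $n$ be a positive integer and $\pi\in S(\mathbb{Z}_n)$. Then $x\mapsto\pi(x)+x$ is a permutation of $\mathbb{Z}_n$ if and only if for no $k\in\mathbb{Z}_n$ does the cycle decomposition of $x\mapsto\pi(x+k)$ contain a cycle of length $2$.
   Context: $S(\mathbb{Z}_n)$ denotes the set of bijections $\mathbb{Z}_n\to\mathbb{Z}_n$. *)

(* Defs.v *)
From mathcomp Require Import all_boot all_order all_algebra all_fingroup.
Set Implicit Arguments. Unset Strict Implicit. Unset Printing Implicit Defensive.
Import GRing.Theory.
Local Open Scope ring_scope.

(* Z_m for m = n.+1 >= 1 is the ordinal type 'I_n.+1 with its canonical
   additive group structure (addition mod n.+1). *)

Definition transl_perm (n : nat) (k : 'I_n.+1) : {perm 'I_n.+1} :=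
  perm (addIr k).

Definition shifted_perm (n : nat) (pi : {perm 'I_n.+1}) (k : 'I_n.+1)
  : {perm 'I_n.+1} := (transl_perm k * pi)%g.

(* Main.v *)
Require Import Defs.
From mathcomp Require Import all_boot all_order all_algebra all_fingroup.
Local Open Scope ring_scope.
Import GRing.Theory.

Lemma shiftedE (n : nat) (pi : {perm 'I_n.+1}) k x :
  shifted_perm pi k x = pi (x + k).
Proof. by rewrite /shifted_perm permM /transl_perm permE. Qed.

Lemma porbit2 (T : finType) (s : {perm T}) a :
  (#|porbit s a| == 2)%N = (s a != a) && (s (s a) == a).
Proof.
have U := uniq_traject_porbit s a.
have I := iter_porbit s a.
have N := card_porbit_neq0 s a.
move: U I N; case: #|porbit s a| => [|[|[|m]]] //=.
- by move=> _ -> _; rewrite eqxx.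
- rewrite inE andbT => H1 H2 _. by rewrite (eq_sym (s a)) H1 H2 !eqxx.
- rewrite !inE !negb_or => /and4P[/and3P[U1 U2 _] _ _ _] _ _.
  apply/esym/negbTE; apply/andP => -[_ /eqP E].
  by rewrite E eqxx in U2.
Qed.

Theorem lemma2p5 (n : nat) (pi : {perm 'I_n.+1}) :
  bijective (fun x : 'I_n.+1 => pi x + x) <->
  ~ (exists k : 'I_n.+1,
       exists2 c : {set 'I_n.+1}, c \in porbits (shifted_perm pi k) & #|c| = 2%N).
Proof.
split.
- move=> /bij_inj inj [k [c /imsetP[a _ ->] /eqP]].
  rewrite porbit2 !shiftedE => /andP[ne /eqP E].
  set b := pi (a + k) in ne E.
  have : a + k = b + k.
    apply: inj => /=; rewrite E /b.
    by rewrite addrA [pi (a + k) + a]addrC addrA.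
  by move/addIr => ab; rewrite ab eqxx in ne.
- move=> H; apply: injF_bij => x y /= Exy.
  apply/eqP; apply/negP => /negP nxy; apply: H.
  exists (y - pi x); exists (porbit (shifted_perm pi (y - pi x)) (x - (y - pi x))).
    by apply: imset_f.
  apply/eqP; rewrite porbit2 !shiftedE subrK.
  rewrite addrCA subrr addr0.
  rewrite (_ : x - (y - pi x) = pi x + (x - y)); last by rewrite opprB addrCA.
  apply/andP; split.
    by rewrite -{1}[pi x]addr0 (inj_eq (addrI _)) eq_sym subr_eq0.
  by rewrite addrA Exy addrK.
Qed.
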